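(* Consider problem (P2): $\sup_{u\in\Gamma^{nT}}J(u)$, and problem (P3): $$\max_{u,\rho,\lambda,\mu,\nu,\eta}\ -\lambda\epsilon(\beta)-\frac1N\sum_{e\in\mathcal E,t\in\mathcal T,l\in\mathcal L}\bar f_e\bar\rho_e\eta^{(l)}_e(t)+\frac1N\sum_{l\in\mathcal L}\langle\nu^{(l)},\rho^{(l)}\rangle$$ subject to, for all $l\in\mathcal L=\{1,\dots,N\}$, $e\in\mathcal E$, $t\in\mathcal T$: $\big(\bar f_e+(\bar\rho_e-\bar f_e/\bar u_e)u_e(t)\big)\eta^{(l)}_e(t)-\mu^{(l)}_e(t)\ge0$; $\nu^{(l)}=\mu^{(l)}+\frac1Tu$; $\|\nu^{(l)}\|_\star\le\lambda$; $\eta^{(l)}\ge0$; $u\in\Gamma^{nT}$; and each $\rho^{(l)}\in\mathbb{R}^{nT}$ is the admissible sample trajectory generated under $u$ from the sample $\varpi^{(l)}$ (dynamics and admissibility constraints with $\varpi^{(l)}$ in place of $\varpi$). Then (P2) is equivalent to (P3) in the sense that their optimal objective values coincide and the set of optimizers of (P2) is the projection (onto $u$) of the set of optimizers of (P3). Further, for any feasible point $(u,\rho,\lambda,\mu,\nu,\eta)$ of (P3) with objective value $\hat J(u)$, one has $\mathrm{Prob}^N\big(\mathbb{E}_{\mathbb{P}(u)}[H(u;\rho)]\ge\hat J(u)\big)\ge1-\beta$.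
   Context: Highway model. Fix integers $n\ge1$, $T\ge1$; segments $e\in\mathcal{E}=\{1,\dots,n\}$ (segment $e\ge2$ has preceding segment $e-1$), time slots $t\in\mathcal{T}=\{0,\dots,T-1\}$. For each $e$: constants $h_e>0$, $\bar\rho_e>0$, $\bar f_e>0$, $\bar u_e>0$ with $\bar u_e\bar\rho_e>\bar f_e$; $\tau_e=\bar f_e/(\bar u_e\bar\rho_e-\bar f_e)$; critical density $\rho^c_e(v)=\tau_e\bar\rho_e\bar u_e/(\tau_e\bar u_e+v)$. Finite set $\Gamma\subset(0,\infty)$ of speed limits; $u=(u_e(t))\in\Gamma^{nT}$. Random vector $\varpi=(\omega,\rho(0),r^{in},r^{o})$ ($\omega(t)\ge0$, $\rho(0)\in\mathbb{R}^n_{\ge0}$, $r^{in}_e(t),r^{o}_e(t)\in[0,1)$) with distribution $\mathbb{P}_\varpi$, assumed light-tailed ($\mathbb{E}[\exp(\|\varpi\|^a)]<\infty$ for some $a>1$). Given $u$ and $\varpi$, trajectory $\rho\in\mathbb{R}^{nT}$: $\rho_1(t+1)=\rho_1(t)+h_1(\omega(t)-u_1(t)\rho_1(t))$; for $e\ge2$, $\rho_e(t+1)=\rho_e(t)+h_e\kappa_e(t)u_{e-1}(t)\rho_{e-1}(t)-h_eu_e(t)\rho_e(t)$, $\kappa_e(t)=\frac{1-r^{o}_{e-1}(t)}{1-r^{in}_e(t)}$, with admissibility $\kappa_e(t)u_{e-1}(t)\rho_{e-1}(t)\le\min\{\bar f_e,\tau_e\bar u_e(\bar\rho_e-\rho_e(t))\}$.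 $\mathbb{P}(u)$ is the law of $\rho$ under $\varpi\sim\mathbb{P}_\varpi$, supported on $\mathcal{Z}(u)=\{\rho:0\le\rho_e(t)\le\rho^c_e(u_e(t))\}$. $H(u;\rho)=\frac1T\sum_{e,t}\rho_e(t)u_e(t)$. Given $N$ i.i.d. samples $\varpi^{(l)}$, $l\in\mathcal L$, with trajectories $\rho^{(l)}$, $\hat{\mathbb{P}}(u)=\frac1N\sum_l\delta_{\rho^{(l)}}$; $\beta\in(0,1)$ and $\epsilon(\beta)>0$ is a Wasserstein radius such that $\mathrm{Prob}^N(\mathbb{P}(u)\in\mathcal{P}(u))\ge1-\beta$, where $\mathcal{P}(u)=\mathbb{B}_{\epsilon(\beta)}(\hat{\mathbb{P}}(u))\cap\mathcal{M}_{lt}(\mathcal{Z}(u))$ ($\mathbb{B}_\epsilon$ = Wasserstein ball w.r.t. the 1-norm, $\mathcal M_{lt}$ = light-tailed distributions); $J(u)=\inf_{\mathbb{Q}\in\mathcal{P}(u)}\mathbb{E}_{\mathbb{Q}}[H(u;\rho)]$. $\|\cdot\|$ is the 1-norm and $\|\cdot\|_\star$ its dual (the $\infty$-norm). $\mathrm{Prob}^N$ is the product probability over the $N$ samples. *)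

(* Defs.v *)
From HB Require Import structures.
From mathcomp Require Import all_boot all_order all_algebra.
From mathcomp Require Import all_classical all_reals all_analysis.
Set Implicit Arguments.
Unset Strict Implicit.
Unset Printing Implicit Defensive.
Import Order.TTheory GRing.Theory Num.Theory.
Import numFieldNormedType.Exports.
Local Open Scope classical_set_scope.
Local Open Scope ring_scope.

(* Vectors in R^{nT}: row e (segment e+1, 0-based) is a T-tuple over time
   slots 0..T-1.  Measurable structure = product (Borel) sigma-algebra. *)
Notation Vec R n T := (n.-tuple (T.-tuple R)).
(* Random inputs varpi = (omega, rho(0), r^in, r^o). *)
Notation Inp R n T := (((T.-tuple R) * (n.-tuple R)) * (Vec R n T * Vec R n T))%type.

(* the segment constants h_e, rhobar_e, fbar_e, ubar_e, indexed by the
   0-based segment number e < n (segment e+1 of the paper) *)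
Record hwy (R : realType) := Hwy {
  hw_h : nat -> R; hw_rhobar : nat -> R; hw_fbar : nat -> R; hw_ubar : nat -> R }.

Section Highway.
Variable R : realType.
Variables n T N : nat.

Definition vat (x : Vec R n T) (e t : nat) : R :=
  nth 0 (nth [::] (map (@tval T R) x) e) t.

Definition w_omega (w : Inp R n T) : T.-tuple R := w.1.1.
Definition w_rho0 (w : Inp R n T) : n.-tuple R := w.1.2.
Definition w_rin (w : Inp R n T) : Vec R n T := w.2.1.
Definition w_ro (w : Inp R n T) : Vec R n T := w.2.2.

Variable hp : hwy R.
Local Notation h := (hw_h hp).
Local Notation rhobar := (hw_rhobar hp).
Local Notation fbar := (hw_fbar hp).
Local Notation ubar := (hw_ubar hp).

Definition tau (e : nat) : R := fbar e / (ubar e * rhobar e - fbar e).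
Definition rhoc (e : nat) (v : R) : R :=
  tau e * rhobar e * ubar e / (tau e * ubar e + v).

(* kappa_e(t) for 0-based e >= 1 *)
Definition kappa (w : Inp R n T) (e t : nat) : R :=
  (1 - vat (w_ro w) e.-1 t) / (1 - vat (w_rin w) e t).

(* state rho(t) as a function of the (0-based) segment *)
Fixpoint st (u : Vec R n T) (w : Inp R n T) (t : nat) : nat -> R :=
  match t with
  | 0 => fun e => nth 0 (w_rho0 w) e
  | t'.+1 => fun e =>
      let p := st u w t' in
      match e with
      | 0 => p 0%N + h 0 * (nth 0 (w_omega w) t' - vat u 0 t' * p 0%N)
      | e'.+1 => p e + h e * kappa w e t' * vat u e' t' * p e'
                 - h e * vat u e t' * p e
      end
  end.

Definition traj (u : Vec R n T) (w : Inp R n T) : Vec R n T :=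
  [tuple [tuple st u w t e | t < T] | e < n].

Definition admissible (u : Vec R n T) (w : Inp R n T) : Prop :=
  forall e t : nat, (0 < e < n)%N -> (t < T)%N ->
    kappa w e t * vat u e.-1 t * vat (traj u w) e.-1 t
    <= Num.min (fbar e) (tau e * ubar e * (rhobar e - vat (traj u w) e t)).

Definition Zset (u : Vec R n T) : set (Vec R n T) :=
  [set rho | forall e t : nat, (e < n)%N -> (t < T)%N ->
             0 <= vat rho e t <= rhoc e (vat u e t)].

Definition inGamma (G : seq R) (u : Vec R n T) : Prop :=
  forall e t : nat, (e < n)%N -> (t < T)%N -> vat u e t \in G.

Definition Hcost (u rho : Vec R n T) : R :=
  T%:R^-1 * \sum_(e < n) \sum_(t < T) vat rho e t * vat u e t.

Definition norm1 (x : Vec R n T) : R :=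
  \sum_(e < n) \sum_(t < T) `|vat x e t|.
Definition dist1 (x y : Vec R n T) : R :=
  \sum_(e < n) \sum_(t < T) `|vat x e t - vat y e t|.
(* dual norm of the 1-norm: the infinity norm *)
Definition normInf (x : Vec R n T) : R :=
  \big[Num.max/0]_(e < n) \big[Num.max/0]_(t < T) `|vat x e t|.
Definition inner (x y : Vec R n T) : R :=
  \sum_(e < n) \sum_(t < T) vat x e t * vat y e t.

Definition normW (w : Inp R n T) : R :=
  \sum_(t < T) `|nth 0 (w_omega w) t| + \sum_(e < n) `|nth 0 (w_rho0 w) e|
  + norm1 (w_rin w) + norm1 (w_ro w).

Definition Wvalid (w : Inp R n T) : Prop :=
  (forall t : nat, (t < T)%N -> 0 <= nth 0 (w_omega w) t) /\
  (forall e : nat, (e < n)%N -> 0 <= nth 0 (w_rho0 w) e) /\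
  (forall e t : nat, (e < n)%N -> (t < T)%N ->
     0 <= vat (w_rin w) e t < 1 /\ 0 <= vat (w_ro w) e t < 1).

Local Open Scope ereal_scope.

Definition coupling (mu nu : set (Vec R n T) -> \bar R)
    (pi : probability (Vec R n T * Vec R n T)%type R) : Prop :=
  forall A, measurable A ->
    pi (fst @^-1` A) = mu A /\ pi (snd @^-1` A) = nu A.

Definition W1 (mu nu : set (Vec R n T) -> \bar R) : \bar R :=
  ereal_inf [set \int[pi]_z (dist1 z.1 z.2)%:E | pi in coupling mu nu].

Definition emp (xs : 'I_N -> Vec R n T) : set (Vec R n T) -> \bar R :=
  fun A => (N%:R^-1 * \sum_(l < N) \1_A (xs l))%:E.

Definition Mlt (Z : set (Vec R n T)) : set (probability (Vec R n T) R) :=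
  [set Q | Q (~` Z) = 0 /\
     exists a : R, (1 < a)%R /\ \int[Q]_x (expR (norm1 x `^ a))%:E < +oo].

Variable eps : R.
Variable G : seq R.

Definition Pset (u : Vec R n T) (ws : 'I_N -> Inp R n T)
   : set (probability (Vec R n T) R) :=
  [set Q : probability (Vec R n T) R | W1 Q (emp (fun l => traj u (ws l))) <= eps%:E] `&` Mlt (Zset u).

Definition J (u : Vec R n T) (ws : 'I_N -> Inp R n T) : \bar R :=
  ereal_inf [set \int[Q]_x (Hcost u x)%:E | Q in Pset u ws].

Definition P2val (ws : 'I_N -> Inp R n T) : \bar R :=
  ereal_sup [set J u ws | u in inGamma G].
Definition P2opt (ws : 'I_N -> Inp R n T) : set (Vec R n T) :=
  [set u | inGamma G u /\ J u ws = P2val ws].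

Record p3pt := P3pt {
  p_u : Vec R n T; p_rho : 'I_N -> Vec R n T; p_lam : R;
  p_mu : 'I_N -> Vec R n T; p_nu : 'I_N -> Vec R n T; p_eta : 'I_N -> Vec R n T }.

Local Close Scope ereal_scope.

Definition P3feasible (ws : 'I_N -> Inp R n T) (x : p3pt) : Prop :=
  [/\ (forall (l : 'I_N) (e t : nat), (e < n)%N -> (t < T)%N ->
        0 <= (fbar e + (rhobar e - fbar e / ubar e) * vat (p_u x) e t)
               * vat (p_eta x l) e t - vat (p_mu x l) e t),
      (forall (l : 'I_N) (e t : nat), (e < n)%N -> (t < T)%N ->
        vat (p_nu x l) e t = vat (p_mu x l) e t + T%:R^-1 * vat (p_u x) e t),
      (forall l : 'I_N, normInf (p_nu x l) <= p_lam x),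
      (forall (l : 'I_N) (e t : nat), (e < n)%N -> (t < T)%N ->
        0 <= vat (p_eta x l) e t) &
      inGamma G (p_u x) /\
      (forall l : 'I_N, p_rho x l = traj (p_u x) (ws l) /\
                        admissible (p_u x) (ws l))].

Definition P3obj (x : p3pt) : R :=
  - p_lam x * eps
  - N%:R^-1 * (\sum_(e < n) \sum_(t < T) \sum_(l < N)
                  fbar e * rhobar e * vat (p_eta x l) e t)
  + N%:R^-1 * \sum_(l < N) inner (p_nu x l) (p_rho x l).

Local Open Scope ereal_scope.

Definition P3val (ws : 'I_N -> Inp R n T) : \bar R :=
  ereal_sup [set (P3obj x)%:E | x in P3feasible ws].
Definition P3opt (ws : 'I_N -> Inp R n T) : set p3pt :=
  [set x | P3feasible ws x /\ (P3obj x)%:E = P3val ws].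

End Highway.

(* "S holds with probability at least 1 - beta" (inner probability) *)
Definition whp (R : realType) (d : measure_display) (O : measurableType d)
  (P : probability O R) (S : set O) (beta : R) : Prop :=
  exists A, [/\ measurable A, A `<=` S & ((1 - beta)%:E <= P A)%E].

Definition mutually_independent (R : realType) (d d' : measure_display)
  (O : measurableType d) (Y : measurableType d') (P : probability O R)
  (N : nat) (X : 'I_N -> O -> Y) : Prop :=
  forall A : 'I_N -> set Y, (forall l, measurable (A l)) ->
    P [set w | forall l, A l (X l w)] = (\prod_(l < N) P (X l @^-1` A l))%E.

Arguments p_u {R n T N}.
Arguments p_rho {R n T N}.
Arguments p_lam {R n T N}.
Arguments p_mu {R n T N}.
Arguments p_nu {R n T N}.
Arguments p_eta {R n T N}.

(* Main.v *)
Require Import Defs.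
From HB Require Import structures.
From mathcomp Require Import all_boot all_order all_algebra.
From mathcomp Require Import all_classical all_reals all_analysis.
From mathcomp Require Import measurable_realfun ring lra.
Import Order.TTheory GRing.Theory Num.Theory.
Import numFieldNormedType.Exports.
Local Open Scope classical_set_scope.
Local Open Scope ring_scope.

Section Mix.
Context d (T : measurableType d) (R : realType) (N : nat) (ys : 'I_N -> T).
Variable N0 : (0 < N)%N.

Definition mix (_ : (0 < N)%N) (A : set T) : \bar R :=
  (N%:R^-1 * \sum_(l < N) \1_A (ys l))%:E.

Lemma mixD A : mix N0 A = (N%:R^-1 * \sum_(l < N) \1_A (ys l))%:E.
Proof. by []. Qed.

Let ysn (k : nat) : T := nth point [seq ys i | i <- enum 'I_N] k.

Let ysnE (i : 'I_N) : ysn i = ys i.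
Proof. by rewrite /ysn (nth_map i) ?size_enum_ord // nth_ord_enum. Qed.

Let cN_ge0 : (0 <= (N%:R : R)^-1). Proof. by rewrite invr_ge0. Qed.
Let cN : {nonneg R} := NngNum cN_ge0.

Lemma mixE : mix N0 = mscale cN (msum (fun k => \d_(ysn k)) N).
Proof.
apply/funext => A; rewrite /mix /mscale /msum /=.
rewrite /msum EFinM; congr (_ * _)%E.
rewrite -sumEFin; apply: eq_bigr => i _.
by rewrite /= diracE ysnE indicE.
Qed.

Let mix0 : mix N0 set0 = 0%E.
Proof. by rewrite mixE measure0. Qed.
Let mix_ge0 A : (0 <= mix N0 A)%E.
Proof. by rewrite mixE measure_ge0. Qed.
Let mix_sa : semi_sigma_additive (mix N0).
Proof. rewrite mixE; exact: measure_semi_sigma_additive. Qed.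
HB.instance Definition _ := isMeasure.Build _ _ _ (mix N0) mix0 mix_ge0 mix_sa.
Let mixT : mix N0 setT = 1%E.
Proof.
rewrite /mix; under eq_bigr do rewrite indicE in_setT.
rewrite sumr_const card_ord mulVf // pnatr_eq0 -lt0n; exact: N0.
Qed.
HB.instance Definition _ := Measure_isProbability.Build _ _ _ (mix N0) mixT.

Lemma integral_mix (f : T -> R) : measurable_fun setT f ->
  (\int[mix N0]_x (f x)%:E = (N%:R^-1 * \sum_(l < N) f (ys l))%:E)%E.
Proof.
move=> mf.
have mfE := (measurable_EFinP setT f).2 mf.
rewrite mixE integralE.
rewrite !ge0_integral_mscale //; last 2 first.
- exact: measurable_funeneg.
- exact: measurable_funepos.
rewrite !ge0_integral_measure_sum //; last 2 first.
- exact: measurable_funeneg.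
- exact: measurable_funepos.
have hd (g : T -> \bar R) : measurable_fun setT g -> forall k : 'I_N,
    (\int[\d_(ysn k)]_x g x = g (ys k))%E.
  by move=> mg k; rewrite integral_dirac // diracT mul1e ysnE.
rewrite !(eq_bigr _ (fun k _ => hd _ (measurable_funepos mfE) k)).
rewrite !(eq_bigr _ (fun k _ => hd _ (measurable_funeneg mfE) k)).
under eq_bigr do rewrite funeposE /= -EFin_max.
under [X in (_ - _ * X)%E]eq_bigr do rewrite funenegE /= -EFin_max.
rewrite !sumEFin -!EFinM -EFinB -mulrBr -sumrB; congr (_ * _)%:E.
apply: eq_bigr => i _.
by rewrite !maxEle; do 2 case: leP => ?; lra.
Qed.
End Mix.
Section Coord.
Set Implicit Arguments.
Unset Strict Implicit.
Variable R : realType.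
Variables n T : nat.
Local Notation V := (Vec R n T).

Lemma vatE (x : V) (i : 'I_n) (j : 'I_T) : vat x i j = tnth (tnth x i) j.
Proof.
rewrite /vat (nth_map (tnth x i)) ?size_tuple // -tnth_nth.
by rewrite (tnth_nth 0).
Qed.

Definition mkV (f : nat -> nat -> R) : V := [tuple [tuple f e t | t < T] | e < n].

Lemma vat_mk f (e t : nat) : (e < n)%N -> (t < T)%N -> vat (mkV f) e t = f e t.
Proof.
move=> en tT; have -> : e = Ordinal en by [].
have -> : t = Ordinal tT by [].
by rewrite vatE !tnth_mktuple.
Qed.

Lemma measurable_vat (i : 'I_n) (j : 'I_T) :
  measurable_fun setT (fun x : V => vat x i j).
Proof.
rewrite (_ : (fun x : V => vat x i j) = (fun y => tnth y j) \o (fun x : V => tnth x i)).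
  apply: measurableT_comp; first exact: measurable_tnth.
  exact: measurable_tnth.
by apply/funext => x; rewrite vatE.
Qed.

Lemma meas_sum2 d (X : measurableType d) (g : 'I_n -> 'I_T -> X -> R) :
  (forall i j, measurable_fun setT (g i j)) ->
  measurable_fun setT (fun x => \sum_(i < n) \sum_(j < T) g i j x).
Proof.
move=> mg; apply: measurable_sum => i; apply: measurable_sum => j; exact: mg.
Qed.

Lemma meas_Hcost (u : V) : measurable_fun setT (Hcost u).
Proof.
apply: measurable_funM; first exact: measurable_cst.
apply: meas_sum2 => i j; apply: measurable_funM; first exact: measurable_vat.
exact: measurable_cst.
Qed.

Lemma meas_dist1 : measurable_fun setT (fun z : V * V => dist1 z.1 z.2).
Proof.
apply: meas_sum2 => i j.
apply: (measurableT_comp (@normr_measurable R setT)).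
apply: measurable_funB.
  exact: (measurableT_comp (measurable_vat i j) measurable_fst).
exact: (measurableT_comp (measurable_vat i j) measurable_snd).
Qed.

Lemma meas_norm1 : measurable_fun setT (@norm1 R n T).
Proof.
apply: meas_sum2 => i j.
exact: (measurableT_comp (@normr_measurable R setT) (measurable_vat i j)).
Qed.

Lemma meas_lt (a : R) : measurable_fun setT (fun x : V => expR (norm1 x `^ a)).
Proof.
apply: (measurableT_comp (@measurable_expR R)).
exact: (measurableT_comp (measurable_powR a) meas_norm1).
Qed.

Lemma meas_lin (c : 'I_n -> 'I_T -> R) :
  measurable_fun setT (fun x : V => \sum_(i < n) \sum_(j < T) c i j * Num.max (vat x i j) 0).
Proof.
apply: meas_sum2 => i j; apply: measurable_funM; first exact: measurable_cst.
apply: measurable_maxr; first exact: measurable_vat.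
exact: measurable_cst.
Qed.
End Coord.

Section Real.
Variable R : realType.

Lemma coord_ineq (nu mu eta rho lam v c rc F : R) :
  0 <= c * eta - mu -> nu = mu + v -> `|nu| <= lam -> 0 <= eta ->
  0 <= rho -> rho <= rc -> rc * c = F -> 0 < c ->
  nu * rho - F * eta <= Num.min lam v * Num.max rho 0.
Proof.
move=> h1 h2 h3 h4 h5 h6 h7 h8.
have hnu : nu <= lam by apply: le_trans h3; exact: ler_norm.
have hmx : Num.max rho 0 = rho by rewrite max_l.
rewrite hmx -h7.
have ce0 : 0 <= c * eta by apply: mulr_ge0 => //; exact: ltW.
have rc0 : 0 <= rc by exact: le_trans h6.
have p1 : 0 <= (rc - rho) * (c * eta) by apply: mulr_ge0 => //; rewrite subr_ge0.
have p2 : 0 <= rho * (c * eta - mu) by apply: mulr_ge0.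
have p3 : 0 <= rc * (c * eta) by apply: mulr_ge0.
have p4 : 0 <= (lam - nu) * rho by apply: mulr_ge0 => //; rewrite subr_ge0.
rewrite minEle; case: ifPn => hl.
- nra.
- rewrite -ltNge in hl; nra.
Qed.

Lemma rhoc_fact (f r ub v : R) : 0 < f -> 0 < r -> 0 < ub -> f < ub * r -> 0 < v ->
  let c := f + (r - f / ub) * v in
  let tau := f / (ub * r - f) in
  0 < c /\ (tau * r * ub / (tau * ub + v)) * c = f * r.
Proof.
move=> f0 r0 ub0 fr v0 c tau.
have D0 : 0 < ub * r - f by rewrite subr_gt0.
have t0 : 0 < tau by rewrite /tau divr_gt0.
have hc : r - f / ub = (ub * r - f) / ub by field; exact: lt0r_neq0.
have c0 : 0 < c by rewrite /c hc; apply: addr_gt0 => //; apply: mulr_gt0 => //; exact: divr_gt0.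
split => //.
have q0 : 0 < tau * ub + v by apply: addr_gt0 => //; exact: mulr_gt0.
rewrite /c /tau.
field.
apply/and3P; split; apply: lt0r_neq0 => //.
by apply: addr_gt0; apply: mulr_gt0.
Qed.
End Real.

Section HW.
Set Implicit Arguments.
Unset Strict Implicit.
Variable R : realType.
Variables n T N : nat.
Local Notation V := (Vec R n T).

Lemma normInf_ge0 (x : V) : 0 <= normInf x.
Proof.
rewrite /normInf; elim/big_ind: _ => //.
  by move=> a b ha hb; rewrite le_max ha.
move=> i _; elim/big_ind: _ => //.
by move=> a b ha hb; rewrite le_max ha.
Qed.

Lemma normInf_ge (x : V) (i : 'I_n) (j : 'I_T) : `|vat x i j| <= normInf x.
Proof.
rewrite /normInf (bigD1 i) //= le_max; apply/orP; left.
by rewrite (bigD1 j) //= le_max lexx.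
Qed.

Lemma normInf_le (x : V) (b : R) : 0 <= b ->
  (forall (i : 'I_n) (j : 'I_T), `|vat x i j| <= b) -> normInf x <= b.
Proof.
move=> b0 hb; rewrite /normInf; elim/big_ind: _ => //.
  by move=> a c ha hc; rewrite ge_max ha.
move=> i _; elim/big_ind: _ => //.
by move=> a c ha hc; rewrite ge_max ha.
Qed.

Lemma meas_Zset (hp : hwy R) (u : V) : measurable (Zset hp u).
Proof.
have -> : Zset hp u = \bigcap_(k in [set: 'I_n * 'I_T])
    ((fun x : V => vat x k.1 k.2) @^-1` `[0, rhoc hp k.1 (vat u k.1 k.2)]).
  apply/seteqP; split => x /=.
  - by move=> Zx [i j] _ /=; rewrite in_itv /=; exact: Zx.
  - move=> H e t en tT; have := H (Ordinal en, Ordinal tT) I.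
    by rewrite /= in_itv.
apply: fin_bigcap_measurable; first exact: finite_finset.
move=> [i j] _; rewrite -[X in measurable X]setTI.
by apply: measurable_vat => //; exact: measurable_itv.
Qed.

Definition linf (c : 'I_n -> 'I_T -> R) (x : V) : R :=
  \sum_(i < n) \sum_(j < T) c i j * Num.max (vat x i j) 0.

Lemma linf_ge0 c x : (forall i j, 0 <= c i j) -> 0 <= linf c x.
Proof.
move=> c0; apply: sumr_ge0 => i _; apply: sumr_ge0 => j _.
by apply: mulr_ge0 => //; rewrite le_max lexx orbT.
Qed.

Lemma dist1_ge0 (x y : V) : 0 <= dist1 x y.
Proof. by apply: sumr_ge0 => i _; apply: sumr_ge0 => j _. Qed.

Lemma coord2 (lam v x y : R) : 0 <= lam -> 0 <= v ->
  Num.min lam v * Num.max y 0 <= v * Num.max x 0 + lam * `|x - y|.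
Proof.
move=> l0 v0.
have [hxy|hxy] := lerP 0 (x - y).
  rewrite (ger0_norm hxy) !maxEle minEle.
  by case: ifPn => h1; case: ifPn => h2; case: ifPn => h3;
    rewrite ?ltNge in h1 h2 h3; nra.
rewrite (ltr0_norm hxy) !maxEle minEle.
by case: ifPn => h1; case: ifPn => h2; case: ifPn => h3;
  rewrite ?ltNge in h1 h2 h3; nra.
Qed.

Lemma linf_le (lam : R) (v : 'I_n -> 'I_T -> R) (x y : V) : 0 <= lam ->
  (forall i j, 0 <= v i j) ->
  linf (fun i j => Num.min lam (v i j)) y <= linf v x + lam * dist1 x y.
Proof.
move=> l0 v0; rewrite /linf /dist1 mulr_sumr -big_split /=.
apply: ler_sum => i _; rewrite mulr_sumr -big_split /=.
by apply: ler_sum => j _; exact: coord2.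
Qed.
End HW.

Section Weak.
Variable R : realType.
Variables n T N : nat.
Local Notation V := (Vec R n T).
Local Open Scope ereal_scope.

Lemma weak_duality (hp : hwy R) (G : seq R) (eps : R)
  (ws : 'I_N -> Inp R n T) (u : V) (Q : probability V R) (x : p3pt R n T N)
  (N0 : (0 < N)%N) :
  (forall e : nat, (e < n)%N ->
     [/\ 0 < hw_h hp e, 0 < hw_rhobar hp e, 0 < hw_fbar hp e, 0 < hw_ubar hp e
       & hw_fbar hp e < hw_ubar hp e * hw_rhobar hp e])%R ->
  (forall e t, (e < n)%N -> (t < T)%N -> 0 < vat u e t)%R ->
  (forall l, Zset hp u (traj hp u (ws l))) ->
  Pset hp eps u ws Q -> P3feasible hp G ws x -> p_u x = u ->
  (P3obj hp eps x)%:E <= \int[Q]_z (Hcost u z)%:E.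
Proof.
move=> hc upos Zs [W1le [QZ0 _]] [c1 c2 c3 c4 [_ c5]] xu.
set ys := fun l => traj hp u (ws l).
set lam := p_lam x.
have lam0 : (0 <= lam)%R.
  by apply: le_trans (c3 (Ordinal N0)); exact: normInf_ge0.
set v := fun (i : 'I_n) (j : 'I_T) => (T%:R^-1 * vat u i j)%R.
have v0 i j : (0 <= v i j)%R.
  by apply: mulr_ge0; [rewrite invr_ge0 | exact/ltW/upos].
set L := linf (fun i j => Num.min lam (v i j)).
set Hp := linf v.
have stepA : (P3obj hp eps x + lam * eps <= N%:R^-1 * \sum_(l < N) L (ys l))%R.
  rewrite /P3obj -/lam.
  set F := fun (l : 'I_N) (e : 'I_n) (t : 'I_T) =>
    (hw_fbar hp e * hw_rhobar hp e * vat (p_eta x l) e t)%R.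
  have -> : (\sum_(e < n) \sum_(t < T) \sum_(l < N)
      hw_fbar hp e * hw_rhobar hp e * vat (p_eta x l) e t =
      \sum_(l < N) \sum_(e < n) \sum_(t < T) F l e t)%R.
    rewrite (eq_bigr (fun e : 'I_n => \sum_(l < N) \sum_(t < T) F l e t)%R).
      by rewrite exchange_big.
    by move=> e _; rewrite exchange_big.
  have -> : (- lam * eps - N%:R^-1 * \sum_(l < N) \sum_(e < n) \sum_(t < T) F l e t +
     N%:R^-1 * \sum_(l < N) inner (p_nu x l) (p_rho x l) + lam * eps =
     N%:R^-1 * (\sum_(l < N) inner (p_nu x l) (p_rho x l) -
                \sum_(l < N) \sum_(e < n) \sum_(t < T) F l e t))%R.
    by rewrite mulrBr; lra.
  apply: ler_wpM2l; first by rewrite invr_ge0.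
  rewrite -sumrB; apply: ler_sum => l _.
  rewrite /inner /L /linf -sumrB; apply: ler_sum => e _.
  rewrite -sumrB; apply: ler_sum => t _.
  have [h0 r0 f0 ub0 fr] := hc e (ltn_ord e).
  have ut := upos e t (ltn_ord e) (ltn_ord t).
  have [cpos crc] := rhoc_fact f0 r0 ub0 fr ut.
  have [Z1 Z2] := andP (Zs l e t (ltn_ord e) (ltn_ord t)).
  rewrite (proj1 (c5 l)) xu /F.
  apply: (coord_ineq (mu := vat (p_mu x l) e t) _ _ _ _ Z1 Z2 crc cpos).
  - by have := c1 l e t (ltn_ord e) (ltn_ord t); rewrite xu.
  - by rewrite (c2 l e t (ltn_ord e) (ltn_ord t)) xu.
  - exact: le_trans (normInf_ge _ _ _) (c3 l).
  - exact: c4.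
have stepB : \int[Q]_z (Hcost u z)%:E = \int[Q]_z (Hp z)%:E.
  apply: ae_eq_integral => //.
  - exact: ((measurable_EFinP setT (Hcost u)).2 (meas_Hcost u)).
  - exact: ((measurable_EFinP setT Hp).2 (meas_lin v)).
  exists (~` Zset hp u); split => //.
    by apply: measurableC; exact: meas_Zset.
  move=> z /= hz Zz; apply: hz => _; congr EFin.
  rewrite /Hcost /Hp /linf mulr_sumr; apply: eq_bigr => i _.
  rewrite mulr_sumr; apply: eq_bigr => j _.
  have [Z1 _] := andP (Zz i j (ltn_ord i) (ltn_ord j)).
  rewrite max_l // /v; ring.
rewrite stepB.
apply/lee_addgt0Pr => dl dl0.
set dl' := (dl / (lam + 1))%R.
have lam1 : (0 < lam + 1)%R by lra.
have dl'0 : (0 < dl')%R by rewrite /dl' divr_gt0.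
have lamdl : (lam * dl' <= dl)%R.
  rewrite /dl' mulrA ler_pdivrMr //; nra.
have : W1 Q (emp ys) < (eps + dl')%:E.
  by apply: le_lt_trans W1le _; rewrite lte_fin ltrDl.
move/ereal_inf_lt => [y [pi cpi <-] hpi].
have mHp : measurable_fun setT (fun z : V => (Hp z)%:E).
  exact: ((measurable_EFinP setT Hp).2 (meas_lin v)).
have mL : measurable_fun setT (fun z : V => (L z)%:E).
  exact: ((measurable_EFinP setT L).2 (meas_lin _)).
have Hp0 z : 0 <= (Hp z)%:E by rewrite lee_fin; exact: linf_ge0.
have L0 z : 0 <= (L z)%:E.
  by rewrite lee_fin; apply: linf_ge0 => i j; rewrite le_min lam0 v0.
have I1 : \int[pi]_z (Hp z.1)%:E = \int[Q]_z (Hp z)%:E.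
  have := ge0_integral_pushforward (phi := fst) measurable_fst pi measurableT mHp
    (fun z _ => Hp0 z).
  rewrite preimage_setT => <-.
  apply: eq_measure_integral => A mA _.
  exact: (cpi A mA).1.
have I2 : \int[pi]_z (L z.2)%:E = (N%:R^-1 * \sum_(l < N) L (ys l))%:E.
  have := ge0_integral_pushforward (phi := snd) measurable_snd pi measurableT mL
    (fun z _ => L0 z).
  rewrite preimage_setT => <-.
  rewrite -(@integral_mix _ _ _ _ ys N0 L (meas_lin _)).
  apply: eq_measure_integral => A mA _.
  exact: (cpi A mA).2.
have mD : measurable_fun setT (fun z : V * V => (dist1 z.1 z.2)%:E).
  exact: ((measurable_EFinP setT _).2 (meas_dist1 (R:=R) (n:=n) (T:=T))).
have mlD : measurable_fun setT (fun z : V * V => (lam * dist1 z.1 z.2)%:E).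
  apply: ((measurable_EFinP setT _).2).
  by apply: measurable_funM; [exact: measurable_cst | exact: meas_dist1].
have mHp1 : measurable_fun setT (fun z : V * V => (Hp z.1)%:E).
  exact: (measurableT_comp mHp measurable_fst).
have mL2 : measurable_fun setT (fun z : V * V => (L z.2)%:E).
  exact: (measurableT_comp mL measurable_snd).
have I3 : \int[pi]_z ((Hp z.1)%:E + (lam * dist1 z.1 z.2)%:E) =
    \int[pi]_z (Hp z.1)%:E + lam%:E * \int[pi]_z (dist1 z.1 z.2)%:E.
  rewrite ge0_integralD //; last first.
    by move=> z _; rewrite lee_fin; apply: mulr_ge0 => //; exact: dist1_ge0.
  congr (_ + _).
  under eq_integral do rewrite EFinM.
  rewrite ge0_integralZl //.
  by move=> z _; rewrite lee_fin; exact: dist1_ge0.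
have ineq : \int[pi]_z (L z.2)%:E <=
    \int[pi]_z ((Hp z.1)%:E + (lam * dist1 z.1 z.2)%:E).
  apply: ge0_le_integral => //.
  - by apply: emeasurable_funD.
  - move=> z _; rewrite -EFinD lee_fin; exact: linf_le.
have key : (P3obj hp eps x + lam * eps)%:E <=
    \int[Q]_z (Hp z)%:E + (lam * (eps + dl'))%:E.
  apply: (@le_trans _ _ (\int[pi]_z (L z.2)%:E)); first by rewrite I2 lee_fin.
  apply: le_trans ineq _; rewrite I3 -I1; apply: leeD2l.
  by rewrite EFinM; apply: lee_wpmul2l; [rewrite lee_fin | exact: ltW hpi].
rewrite -(@leeD2rE _ ((lam * eps)%:E)) //.
have -> : (P3obj hp eps x)%:E + (lam * eps)%:E = (P3obj hp eps x + lam * eps)%:E by [].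
apply: le_trans key _; rewrite -[X in _ <= X]addeA -[X in _ <= _ + X]EFinD; apply: leeD2l.
rewrite lee_fin; nra.
Qed.
End Weak.

Section Select.
Variable R : realType.

Lemma select (K : finType) (v rho : K -> R) (eps : R) :
  (forall k, 0 < v k) -> (forall k, 0 <= rho k) -> 0 < eps ->
  exists lam th : R,
    let w k := (((lam < v k)%R : nat)%:R + th * ((v k == lam)%R : nat)%:R) in
    [/\ 0 <= lam, 0 <= th <= 1, \sum_k rho k * w k <= eps &
        lam * \sum_k rho k * w k = lam * eps].
Proof.
move=> v0 rho0 eps0.
pose mGe c := \sum_k rho k * ((c <= v k)%R : nat)%:R.
pose mGt c := \sum_k rho k * ((c < v k)%R : nat)%:R.
pose mEq c := \sum_k rho k * ((v k == c)%R : nat)%:R.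
pose P k := eps <= mGe (v k).
pose lam := \big[Num.max/0]_(k | P k) v k.
have lam0 : 0 <= lam.
  rewrite /lam; elim/big_ind: _ => //.
    by move=> a b ha hb; rewrite le_max ha.
  by move=> k _; exact/ltW.
have lamP : 0 < lam -> eps <= mGe lam.
  have : lam = 0 \/ eps <= mGe lam.
    rewrite /lam; elim/big_ind: _ => //; first by left.
      move=> a b ha hb; rewrite maxEle; case: ifPn => _ //.
    by move=> k Pk; right.
  by case=> [->|//]; rewrite ltxx.
have ub k : P k -> v k <= lam.
  by move=> Pk; rewrite /lam (bigD1 k) //= le_max lexx.
have mGtle : mGt lam <= eps.
  rewrite leNgt; apply/negP => hgt.
  have [k1 hk1] : exists k, lam < v k.
    apply/not_existsP => hn.
    move: hgt; rewrite /mGt big1 ?ltNge ?ltW //.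
    move=> k _; case: ltP => h; last by rewrite mulr0.
    by exfalso; apply: (hn k).
  case: (arg_minP v (P := fun k => lam < v k) hk1) => k0 hk0 hmin.
  have : mGe (v k0) = mGt lam.
    apply: eq_bigr => k _; congr (_ * _%:R).
    case: (ltP lam (v k)) => h.
      have hh : (v k0 <= v k)%R := hmin k h. by rewrite hh.
    have hh : (v k < v k0)%R := le_lt_trans h hk0. by rewrite leNgt hh.
  move=> e0; have : P k0 by rewrite /P e0; exact: ltW.
  by move/ub; rewrite leNgt hk0.
have split_ge c : mGe c = mGt c + mEq c.
  rewrite /mGe /mGt /mEq -big_split /=; apply: eq_bigr => k _.
  rewrite -mulrDr; congr (_ * _).
  by case: (ltgtP c (v k)) => h //=; rewrite ?addr0 ?add0r // h eqxx.
have mEq0 c : 0 <= mEq c.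
  by apply: sumr_ge0 => k _; apply: mulr_ge0.
have mGt0 c : 0 <= mGt c.
  by apply: sumr_ge0 => k _; apply: mulr_ge0.
have Bsplit (th : R) : \sum_k rho k * (((lam < v k)%R : nat)%:R + th * ((v k == lam)%R : nat)%:R)
    = mGt lam + th * mEq lam.
  rewrite /mGt /mEq mulr_sumr -big_split /=; apply: eq_bigr => k _.
  by rewrite mulrDr mulrCA.
case: (boolP ((0 < lam) && (0 < mEq lam))) => [/andP [l0 m0]|hc].
  exists lam, ((eps - mGt lam) / mEq lam) => /=; rewrite Bsplit.
  have e1 : (eps - mGt lam) / mEq lam * mEq lam = eps - mGt lam.
    by rewrite divfK // lt0r_neq0.
  have ge := lamP l0; rewrite split_ge in ge.
  split => //.
  - apply/andP; split.
      by apply: divr_ge0 => //; rewrite subr_ge0.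
    by rewrite ler_pdivrMr // mul1r lerBlDl.
  - by rewrite e1; lra.
  - by rewrite e1; congr (_ * _); lra.
exists lam, 0 => /=; rewrite Bsplit mul0r addr0.
split => //; first by rewrite lexx ler01.
case: (ltP 0 lam) => hl; last first.
  have -> : lam = 0 by apply/le_anti; rewrite hl lam0.
  by rewrite !mul0r.
move: hc; rewrite hl /= -leNgt => hm.
have hm0 : mEq lam = 0 by apply/le_anti; rewrite hm mEq0.
have ge := lamP hl; rewrite split_ge hm0 addr0 in ge.
by congr (_ * _); apply/le_anti; rewrite mGtle ge.
Qed.
End Select.

Section Strong.
Variable R : realType.
Variables n T N : nat.
Local Notation V := (Vec R n T).

Definition wfun (lam th v : R) : R :=
  ((lam < v)%R : nat)%:R + th * ((v == lam)%R : nat)%:R.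

Lemma wfun01 lam th v : 0 <= th <= 1 -> 0 <= wfun lam th v <= 1.
Proof.
move=> /andP [h0 h1]; rewrite /wfun.
by case: (ltgtP lam v) => h /=; rewrite ?eqxx /=; apply/andP; split; lra.
Qed.

Lemma coord_id lam th v rho :
  v * (rho * (1 - wfun lam th v)) = Num.min lam v * rho - lam * (rho * wfun lam th v).
Proof.
rewrite /wfun minEle.
case: (ltgtP lam v) => h /=; rewrite ?eqxx /=; try ring.
by rewrite h; ring.
Qed.


Lemma strong (hp : hwy R) (G : seq R) (eps : R) (ws : 'I_N -> Inp R n T) (u : V)
  (N0 : (0 < N)%N) (T0 : (0 < T)%N) :
  (0 < eps)%R -> inGamma G u ->
  (forall e t, (e < n)%N -> (t < T)%N -> 0 < vat u e t)%R ->
  (forall l, Zset hp u (traj hp u (ws l)) /\ admissible hp u (ws l)) ->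
  exists x : p3pt R n T N, [/\ P3feasible hp G ws x, p_u x = u &
    (exists2 Q : probability V R, Pset hp eps u ws Q &
      (\int[Q]_z (Hcost u z)%:E)%E = (P3obj hp eps x)%:E)].
Proof.
move=> eps0 uG upos hs.
set ys := fun l => traj hp u (ws l).
pose vK (k : 'I_N * ('I_n * 'I_T)) := (T%:R^-1 * vat u k.2.1 k.2.2)%R.
pose rK (k : 'I_N * ('I_n * 'I_T)) := (N%:R^-1 * vat (ys k.1) k.2.1 k.2.2)%R.
have vK0 k : (0 < vK k)%R.
  by apply: mulr_gt0; [rewrite invr_gt0 ltr0n | exact: upos].
have rK0 k : (0 <= rK k)%R.
  apply: mulr_ge0; first by rewrite invr_ge0.
  by have /andP[] := (hs k.1).1 k.2.1 k.2.2 (ltn_ord _) (ltn_ord _).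
have [lam [th /= [lam0 th01 Ble Beq]]] := select vK0 rK0 eps0.
pose v (e t : nat) := (T%:R^-1 * vat u e t)%R.
pose w (e t : nat) := wfun lam th (v e t).
pose rho (l : 'I_N) (e t : nat) := vat (ys l) e t.
have rho0 l (e : 'I_n) (t : 'I_T) : (0 <= rho l e t)%R.
  by have /andP[] := (hs l).1 e t (ltn_ord _) (ltn_ord _).
have rhoc1 l (e : 'I_n) (t : 'I_T) : (rho l e t <= rhoc hp e (vat u e t))%R.
  by have /andP[] := (hs l).1 e t (ltn_ord _) (ltn_ord _).
have w01 e t : (0 <= w e t <= 1)%R by exact: wfun01.
pose S2 := (\sum_(l < N) \sum_(e < n) \sum_(t < T) rho l e t * w e t)%R.
have BE : (\sum_k rK k * (((lam < vK k)%R : nat)%:R + th * ((vK k == lam)%R : nat)%:R)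
    = N%:R^-1 * S2)%R.
  rewrite /S2 (eq_bigr (fun l => \sum_(p : 'I_n * 'I_T) rho l p.1 p.2 * w p.1 p.2)%R);
    last by move=> l _; rewrite pair_bigA.
  rewrite pair_bigA mulr_sumr; apply: eq_bigr => k _.
  by rewrite /rK /= mulrA.
rewrite BE in Ble Beq.
have v0 e t : (e < n)%N -> (t < T)%N -> (0 <= v e t)%R.
  by move=> en tT; apply: mulr_ge0; [rewrite invr_ge0 | exact/ltW/upos].
pose ysr l := mkV n T (fun e t => rho l e t * (1 - w e t))%R.
have Zr l : Zset hp u (ysr l).
  move=> e t en tT; rewrite vat_mk //.
  have r0 := rho0 l (Ordinal en) (Ordinal tT).
  have r1 := rhoc1 l (Ordinal en) (Ordinal tT).
  have /andP [w0 w1] := w01 e t.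
  apply/andP; split; first by apply: mulr_ge0 => //; rewrite subr_ge0.
  apply: le_trans r1; rewrite /= ler_piMr //; lra.
pose nuV := mkV n T (fun e t => Num.min lam (v e t)).
pose muV := mkV n T (fun e t => Num.min lam (v e t) - v e t)%R.
pose etaV := @mkV R n T (fun _ _ => 0%R).
exists (@P3pt R n T N u ys lam (fun=> muV) (fun=> nuV) (fun=> etaV)).
split => //.
  split => //=.
  - move=> l e t en tT; rewrite !vat_mk // mulr0 sub0r opprB subr_ge0.
    by rewrite ge_min lexx orbT.
  - by move=> l e t en tT; rewrite !vat_mk // subrK.
  - move=> l; apply: normInf_le => // i j; rewrite vat_mk // ger0_norm.
      by rewrite ge_min lexx.
    by rewrite le_min lam0 v0.
  - by move=> l e t en tT; rewrite vat_mk.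
  - by split => // l; split => //; exact: (hs l).2.
exists (@mix _ _ R N ysr N0).
  split.
    pose pi := @mix _ _ R N (fun l => (ysr l, ys l)) N0.
    apply: (@le_trans _ _ (\int[pi]_z (dist1 z.1 z.2)%:E)%E).
      apply: ereal_inf_lbound; exists pi => //.
    rewrite /pi (@integral_mix _ _ R N (fun l => (ysr l, ys l)) N0 (fun z : V * V => dist1 z.1 z.2) (@meas_dist1 R n T)).
    rewrite lee_fin; apply: le_trans Ble; rewrite le_eqVlt; apply/orP; left; apply/eqP.
    congr (_ * _); apply: eq_bigr => l _; rewrite /dist1 /=.
    apply: eq_bigr => e _; apply: eq_bigr => t _; rewrite vat_mk //.
    have -> : (rho l e t * (1 - w e t) - vat (ys l) e t = - (rho l e t * w e t))%R.
      by rewrite /rho; ring.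
    rewrite normrN ger0_norm //; apply: mulr_ge0 => //.
    by have /andP[] := w01 e t.
  split.
    apply: (@eq_trans _ _ ((N%:R^-1 * \sum_(l < N) \1_(~` Zset hp u) (ysr l))%:E)%E) => //.
    rewrite big1 ?mulr0 // => l _.
    by rewrite indicE memNset // => /(_ (Zr l)).
  exists 2%R; split; first by lra.
  rewrite (@integral_mix _ _ R N ysr N0 _ (@meas_lt R n T 2)).
  exact: ltry.
rewrite (@integral_mix _ _ R N ysr N0 _ (@meas_Hcost R n T u)); congr EFin.
rewrite /P3obj /=.
pose S1 := (\sum_(l < N) \sum_(e < n) \sum_(t < T) Num.min lam (v e t) * rho l e t)%R.
have E0 : (\sum_(e < n) \sum_(t < T) \sum_(l < N)
    hw_fbar hp e * hw_rhobar hp e * vat etaV e t = 0)%R.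
  apply: big1 => e _; apply: big1 => t _; apply: big1 => l _.
  by rewrite vat_mk // mulr0.
have E1 : (\sum_(l < N) inner nuV (ys l) = S1)%R.
  apply: eq_bigr => l _; apply: eq_bigr => e _; apply: eq_bigr => t _.
  by rewrite vat_mk.
have E2 : (\sum_(l < N) Hcost u (ysr l) = S1 - lam * S2)%R.
  rewrite /S2 [lam * _]mulr_sumr /S1 -sumrB; apply: eq_bigr => l _.
  rewrite /Hcost [lam * _]mulr_sumr mulr_sumr -sumrB; apply: eq_bigr => e _.
  rewrite [lam * _]mulr_sumr mulr_sumr -sumrB; apply: eq_bigr => t _.
  rewrite vat_mk // -coord_id /v /w; ring.
rewrite E0 E1 E2 mulNr -Beq; ring.
Qed.

End Strong.


Theorem theorem2
  (R : realType) (n T N : nat)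
  (hp : hwy R) (G : seq R) (beta eps : R)
  (d : measure_display) (Omega : measurableType d) (P : probability Omega R)
  (Pw : probability (Inp R n T) R)
  (X : 'I_N -> Omega -> Inp R n T)
  (Wadm : set (Inp R n T))
  (Pu : Vec R n T -> probability (Vec R n T) R) :
  (0 < n)%N -> (0 < T)%N -> (0 < N)%N ->
  (forall e : nat, (e < n)%N ->
     [/\ 0 < hw_h hp e, 0 < hw_rhobar hp e, 0 < hw_fbar hp e, 0 < hw_ubar hp e
       & hw_fbar hp e < hw_ubar hp e * hw_rhobar hp e]) ->
  (forall g, g \in G -> 0 < g) ->
  0 < beta < 1 -> 0 < eps ->
  (* varpi is light-tailed *)
  (exists a : R, 1 < a /\
     (\int[Pw]_w (expR (normW w `^ a))%:E < +oo)%E) ->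
  (* the model: P_varpi-a.s. varpi is in range, and for every u the trajectory
     is admissible and lies in Z(u) *)
  measurable Wadm -> Pw Wadm = 1%E ->
  (forall w, Wadm w -> Wvalid w /\
     forall u, inGamma G u ->
       admissible hp u w /\ Zset hp u (traj hp u w)) ->
  (* varpi^(1), ..., varpi^(N) are i.i.d. with law P_varpi *)
  (forall l, measurable_fun [set: Omega] (X l)) ->
  (forall l A, measurable A -> P (X l @^-1` A) = Pw A) ->
  mutually_independent P X ->
  (forall l w, Wadm (X l w)) ->
  (* P(u) is the law of rho = traj(u, varpi) *)
  (forall u, inGamma G u -> forall A, measurable A ->
     Pu u A = Pw (traj hp u @^-1` A)) ->
  (* eps = epsilon(beta): Prob^N(P(u) in calP(u)) >= 1 - beta *)
  (forall u, inGamma G u ->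
     whp P [set w | Pset hp eps u (fun l => X l w) (Pu u)] beta) ->
  (* (P2) <=> (P3), for every realisation of the samples *)
  (forall w : Omega,
     P2val hp eps G (fun l => X l w)
       = P3val hp eps G (fun l => X l w)
     /\ P2opt hp eps G (fun l => X l w)
       = p_u @` P3opt hp eps G (fun l => X l w))
  /\
  (* finite-sample guarantee for any (sample-dependent) feasible point of (P3) *)
  (forall (u : Vec R n T) (sel : Omega -> p3pt R n T N),
     inGamma G u ->
     (forall w, P3feasible hp G (fun l => X l w) (sel w)
                /\ p_u (sel w) = u) ->
     whp P [set w | (P3obj hp eps (sel w))%:E
                      <= \int[Pu u]_x (Hcost u x)%:E]%E beta).
Proof.
move=> n0 T0 N0 hc Gpos beta01 eps0 _ _ _ hW _ _ _ XW hPu hwhp.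
have upos (u : Vec R n T) : inGamma G u ->
    forall e t, (e < n)%N -> (t < T)%N -> 0 < vat u e t.
  by move=> uG e t en tT; apply: Gpos; exact: uG.
pose hyps := fun (ws : 'I_N -> Inp R n T) => forall l u, inGamma G u ->
  admissible hp u (ws l) /\ Zset hp u (traj hp u (ws l)).
have hypsX w : hyps (fun l => X l w).
  by move=> l u uG; exact: ((hW _ (XW l w)).2 u uG).
have Jge : forall ws0 : 'I_N -> Inp R n T, hyps ws0 -> forall x, P3feasible hp G ws0 x ->
    ((P3obj hp eps x)%:E <= J hp eps (p_u x) ws0)%E.
  move=> ws0 hs x fx; apply: le_ereal_inf_tmp => y [Q PQ <-].
  have uG : inGamma G (p_u x) by case: fx => _ _ _ _ [].
  apply: (weak_duality (G := G) (ws := ws0) N0 hc (upos _ uG)) => //.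
  by move=> l; exact: (hs l _ uG).2.
have Jeq : forall ws0 : 'I_N -> Inp R n T, hyps ws0 -> forall u, inGamma G u -> exists x,
    [/\ P3feasible hp G ws0 x, p_u x = u & J hp eps u ws0 = (P3obj hp eps x)%:E].
  move=> ws0 hs u uG.
  have [x [fx xu [Q PQ IQ]]] := strong N0 T0 eps0 uG (upos _ uG)
    (fun l => conj (hs l u uG).2 (hs l u uG).1).
  exists x; split => //; apply/le_anti/andP; split.
    by rewrite -IQ; apply: ereal_inf_lbound; exists Q.
  by rewrite -xu; exact: Jge.
split.
  move=> w; have hs := hypsX w.
  have vals : P2val hp eps G (fun l => X l w) = P3val hp eps G (fun l => X l w).
    apply/le_anti/andP; split.
      apply: ge_ereal_sup => y [u uG <-].
      have [x [fx xu ->]] := Jeq _ hs u uG.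
      by apply: ereal_sup_ubound; exists x.
    apply: ge_ereal_sup => y [x fx <-].
    apply: le_trans (Jge _ hs x fx) _.
    apply: ereal_sup_ubound; exists (p_u x) => //.
    by case: fx => _ _ _ _ [].
  split => //.
  apply/seteqP; split.
    move=> u [uG Ju].
    have [x [fx xu Jx]] := Jeq _ hs u uG.
    exists x => //; split => //.
    by rewrite -Jx Ju.
  move=> _ [x [fx ox] <-].
  have uG : inGamma G (p_u x) by case: fx => _ _ _ _ [].
  split => //; apply/le_anti/andP; split.
    by apply: ereal_sup_ubound; exists (p_u x).
  by rewrite vals -ox; exact: Jge.
move=> u sel uG hsel.
have [A [mA sub pA]] := hwhp u uG.
exists A; split => // w Aw.
have PQ := sub w Aw.
have [fx xu] := hsel w.
apply: (weak_duality (G := G) (ws := fun l => X l w) N0 hc (upos _ uG)) => //.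
by move=> l; exact: (hypsX w l u uG).2.
Qed.
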